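(* Let $\mathbb{k}$ be a field of characteristic $p>0$ and $V$ a finite-dimensional $\mathbb{k}$-vector space. Let $\mathcal{I}(V)$ be the ideal of $\Gamma_{\mathbb{k}}(V)$ generated by $\Gamma^1_{\mathbb{k}}(V)=V$ and $\mathrm{gr}\,\Gamma(V)=\bigoplus_{n\ge0}\mathcal{I}(V)^n/\mathcal{I}(V)^{n+1}$. There is an isomorphism of $\mathcal{P}_{\mathbb{k}}$-algebras $\mathrm{gr}\,\Gamma(V)\simeq Q(V)\otimes\Gamma_{\mathbb{k}}(V^{(1)})$ which maps $\mathcal{I}(V)^n/\mathcal{I}(V)^{n+1}$ isomorphically onto $Q^n(V)\otimes\Gamma_{\mathbb{k}}(V^{(1)})$.
   Context: $\mathcal{P}_{\mathbb{k}}$-algebras are algebras whose homogeneous components of each weight are strict polynomial functors of $V$ over $\mathbb{k}$ and whose multiplication is a morphism of strict polynomial functors. $V^{(1)}$ is the Frobenius twist: the strict polynomial subfunctor of $S^p_{\mathbb{k}}(V)$ generated by $p$-th powers (weight $p$). $Q(V)$ is the truncated polynomial algebra, the quotient of $S_{\mathbb{k}}(V)$ by the ideal generated by $V^{(1)}\subset S^p_{\mathbb{k}}(V)$, and $Q^n(V)$ is its homogeneous component of degree $n$. *)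

(* Defs.v *)
From HB Require Import structures.
From mathcomp Require Import all_boot all_order all_algebra.
From mathcomp Require Export mpoly.
Set Implicit Arguments.
Unset Strict Implicit.
Unset Printing Implicit Defensive.
Import Order.TTheory GRing.Theory.
Local Open Scope ring_scope.

(* V = R^d with standard basis e_0..e_{d-1}.
   * Gamma_R(R^d) is represented by {mpoly R[d]}: the coefficient of 'X_[a]
     is the coefficient of the divided-power monomial
     gamma^a = gamma^{a_0}(e_0) ... gamma^{a_{d-1}}(e_{d-1});
     the product is the divided power product [dpmul].
   * S_R(R^d) is the ordinary {mpoly R[d]}; Q_R(R^d) = S/(V^(1)) is
     represented by normal forms: polynomials all of whose exponents are < p.
   * V^(1) has basis x_i^p; Gamma(V^(1)) is represented by {mpoly R[d]}
     in the same way as Gamma (variable i <-> x_i^p), of weight p per degree.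
   * Q(V) (x) Gamma(V^(1)) is represented by {mpoly R[d + d]}: the first d
     exponents are the Q-monomial, the last d the Gamma(V^(1))-monomial.
   * A linear map R^d -> R^e is a matrix M : 'M[R]_(d, e),
     e_i |-> \sum_j M i j f_j.                                            *)

Section Gamma.
Variables (R : comNzRingType) (d : nat).

(* coefficient of gamma^(a+b) in gamma^a * gamma^b *)
Definition dpc (a b : 'X_{1..d}) : nat := (\prod_(i < d) 'C(a i + b i, a i))%N.

Definition dpmul (f g : {mpoly R[d]}) : {mpoly R[d]} :=
  \sum_(a <- msupp f) \sum_(b <- msupp g)
     ((f@_a * g@_b) *+ dpc a b) *: 'X_[(a + b)%MM].

Definition dpprod (s : seq {mpoly R[d]}) : {mpoly R[d]} := foldr dpmul 1 s.

(* f lies in I(V)^n, I(V) the ideal generated by Gamma^1(V) = V: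
   I^n is spanned by the gamma^b * v_1 * ... * v_n with v_i basis vectors. *)
Definition Ipow (n : nat) (f : {mpoly R[d]}) : Prop :=
  exists s : seq ('X_{1..d} * n.-tuple 'I_d * R),
    f = \sum_(t <- s)
          t.2 *: dpmul 'X_[t.1.1] (dpprod [seq 'X_[(U_(i))%MM] | i <- t.1.2]).

Definition dphomog (w : nat) (f : {mpoly R[d]}) : bool :=
  all (fun a => mdeg a == w) (msupp f).

Definition qtrunc (p : nat) (f : {mpoly R[d]}) : {mpoly R[d]} :=
  \sum_(a <- msupp f | all (fun i => a i < p)%N (enum 'I_d)) f@_a *: 'X_[a].

Definition mjoin (a b : 'X_{1..d}) : 'X_{1..d + d} :=
  [multinom (match split i with inl j => a j | inr j => b j end) | i < d + d].
Definition mfst (m : 'X_{1..d + d}) : 'X_{1..d} := [multinom m (lshift d i) | i < d].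
Definition msnd (m : 'X_{1..d + d}) : 'X_{1..d} := [multinom m (rshift d i) | i < d].

Definition tens (u v : {mpoly R[d]}) : {mpoly R[d + d]} :=
  \sum_(a <- msupp u) \sum_(b <- msupp v) (u@_a * v@_b) *: 'X_[mjoin a b].

Definition tmul (p : nat) (t s : {mpoly R[d + d]}) : {mpoly R[d + d]} :=
  \sum_(a <- msupp t) \sum_(b <- msupp s)
    (t@_a * s@_b) *: tens (qtrunc p ('X_[mfst a] * 'X_[mfst b]))
                          (dpmul 'X_[msnd a] 'X_[msnd b]).

Definition isQGam (p : nat) (t : {mpoly R[d + d]}) : bool :=
  all (fun m => all (fun i => mfst m i < p)%N (enum 'I_d)) (msupp t).

Definition Qdeg (n : nat) (t : {mpoly R[d + d]}) : bool :=
  all (fun m => mdeg (mfst m) == n) (msupp t).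

Definition Tweight (p w : nat) (t : {mpoly R[d + d]}) : bool :=
  all (fun m => mdeg (mfst m) + p * mdeg (msnd m) == w)%N (msupp t).

End Gamma.

Section Functoriality.
Variables (R : comNzRingType) (d e : nat).

(* gamma^n (\sum_j c_j f_j) = \sum_{|b| = n} c^b gamma^b in Gamma_R(R^e) *)
Definition dppow (n : nat) (c : 'I_e -> R) : {mpoly R[e]} :=
  \sum_(b : 'X_{1..e < n.+1} | mdeg b == n)
     (\prod_(j < e) c j ^+ (bmnm b) j) *: 'X_[bmnm b].

Definition GammaMap (M : 'M[R]_(d, e)) (f : {mpoly R[d]}) : {mpoly R[e]} :=
  \sum_(a <- msupp f) f@_a *:
     dpprod [seq dppow (a i) (fun j => M i j) | i <- enum 'I_d].

Definition QMap (p : nat) (M : 'M[R]_(d, e)) (f : {mpoly R[d]}) : {mpoly R[e]} :=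
  qtrunc p (f \mPo [tuple \sum_(j < e) M i j *: 'X_j | i < d]).

(* Gamma(M^(1)) : V^(1)(M) sends x_i^p to (\sum_j M i j x_j)^p = \sum_j M i j ^p x_j^p *)
Definition Gamma1Map (p : nat) (M : 'M[R]_(d, e)) (f : {mpoly R[d]}) : {mpoly R[e]} :=
  GammaMap (map_mx (fun c => c ^+ p) M) f.

Definition TMap (p : nat) (M : 'M[R]_(d, e)) (t : {mpoly R[d + d]}) : {mpoly R[e + e]} :=
  \sum_(m <- msupp t) t@_m *:
     tens (QMap p M 'X_[mfst m]) (Gamma1Map p M 'X_[msnd m]).

End Functoriality.

(* base change of a k-linear map between monomial-based modules to R (x)_k - *)
Definition bc (k : fieldType) (R : comAlgType k) (d d' : nat)
  (F : {mpoly k[d]} -> {mpoly k[d']}) (g : {mpoly R[d]}) : {mpoly R[d']} :=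
  \sum_(a <- msupp g) g@_a *: map_mpoly (fun c : k => c%:A) (F 'X_[a]).

(* Main.v *)
Require Import Defs.
From HB Require Import structures.
From mathcomp Require Import all_boot all_order all_algebra.
From mathcomp Require Import mpoly.
From mathcomp Require Import ring.
Set Implicit Arguments.
Unset Strict Implicit.
Unset Printing Implicit Defensive.
Import GRing.Theory.
Local Open Scope ring_scope.


Section Lin.
Variable R : comNzRingType.

Definition lin d d' (phi : 'X_{1..d} -> {mpoly R[d']}) (f : {mpoly R[d]}) :=
  \sum_(a <- msupp f) f@_a *: phi a.

Lemma lin_sumE d d' (phi : 'X_{1..d} -> {mpoly R[d']}) f (s : seq 'X_{1..d}) :
  uniq s -> {subset msupp f <= s} -> lin phi f = \sum_(a <- s) f@_a *: phi a.
Proof.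
move=> us sub; rewrite /lin.
rewrite [RHS](bigID (fun a => a \in msupp f)) /=.
rewrite [X in _ = _ + X]big1 ?addr0; last first.
  by move=> a /memN_msupp_eq0 ->; rewrite scale0r.
rewrite -[in RHS]big_filter; apply: perm_big.
apply: uniq_perm; rewrite ?msupp_uniq ?filter_uniq //.
by move=> a; rewrite mem_filter; apply/idP/andP => [h|[]//]; split=> //; exact: sub.
Qed.

Lemma linDZ d d' (phi : 'X_{1..d} -> {mpoly R[d']}) c f g :
  lin phi (c *: f + g) = c *: lin phi f + lin phi g.
Proof.
pose s := undup (msupp f ++ msupp g ++ msupp (c *: f + g)).
have us : uniq s by exact: undup_uniq.
rewrite !(@lin_sumE _ _ _ _ s) //; last first.
- by move=> a ha; rewrite mem_undup !mem_cat ha ?orbT.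
- by move=> a ha; rewrite mem_undup !mem_cat ha ?orbT.
- by move=> a ha; rewrite mem_undup !mem_cat ha ?orbT.
rewrite scaler_sumr -big_split /=; apply: eq_bigr => a _.
by rewrite mcoeffD mcoeffZ scalerDl scalerA.
Qed.

Lemma lin0 d d' (phi : 'X_{1..d} -> {mpoly R[d']}) : lin phi 0 = 0.
Proof. by rewrite /lin big1 // => a _; rewrite mcoeff0 scale0r. Qed.

Lemma linD d d' (phi : 'X_{1..d} -> {mpoly R[d']}) f g :
  lin phi (f + g) = lin phi f + lin phi g.
Proof. by have := linDZ phi 1 f g; rewrite !scale1r. Qed.

Lemma linZ d d' (phi : 'X_{1..d} -> {mpoly R[d']}) c f :
  lin phi (c *: f) = c *: lin phi f.
Proof. by rewrite -[c *: f]addr0 linDZ lin0 addr0. Qed.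

Lemma lin_sum d d' (phi : 'X_{1..d} -> {mpoly R[d']}) I (r : seq I) (P : pred I) F :
  lin phi (\sum_(i <- r | P i) F i) = \sum_(i <- r | P i) lin phi (F i).
Proof. by apply: (big_morph _ (linD phi) (lin0 phi)). Qed.

Lemma linX d d' (phi : 'X_{1..d} -> {mpoly R[d']}) a : lin phi 'X_[a] = phi a.
Proof. by rewrite /lin msuppX big_seq1 mcoeffX eqxx scale1r. Qed.

Lemma linXZ d d' (phi : 'X_{1..d} -> {mpoly R[d']}) c a : lin phi (c *: 'X_[a]) = c *: phi a.
Proof. by rewrite linZ linX. Qed.

Lemma eq_lin d d' (phi psi : 'X_{1..d} -> {mpoly R[d']}) f :
  {in msupp f, phi =1 psi} -> lin phi f = lin psi f.
Proof. by move=> h; apply: eq_big_seq => a /h ->. Qed.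

Lemma lin_phiDZ d d' (phi1 phi2 : 'X_{1..d} -> {mpoly R[d']}) c f :
  lin (fun a => c *: phi1 a + phi2 a) f = c *: lin phi1 f + lin phi2 f.
Proof.
rewrite /lin scaler_sumr -big_split; apply: eq_bigr => a _.
by rewrite scalerDr !scalerA mulrC.
Qed.

Lemma lin_comp d d' d'' (phi : 'X_{1..d} -> {mpoly R[d']}) (psi : 'X_{1..d'} -> {mpoly R[d'']}) f :
  lin psi (lin phi f) = lin (fun a => lin psi (phi a)) f.
Proof. by rewrite {1}[lin phi f]/lin lin_sum; apply: eq_bigr => a _; rewrite linZ. Qed.

Definition islin d d' (F : {mpoly R[d]} -> {mpoly R[d']}) :=
  forall c f g, F (c *: f + g) = c *: F f + F g.

Lemma linE d d' (F : {mpoly R[d]} -> {mpoly R[d']}) f :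
  islin F -> F f = lin (fun a => F 'X_[a]) f.
Proof.
move=> hF.
have F0 : F 0 = 0.
  by have := hF 1 0 0; rewrite scaler0 addr0 scale1r => h; apply: (addrI (F 0)); rewrite addr0 -h.
have FD : forall x y, F (x + y) = F x + F y.
  by move=> x y; have := hF 1 x y; rewrite !scale1r.
rewrite {1}(mpolyE f) /lin (big_morph _ FD F0); apply: eq_bigr => a _.
by rewrite -[_ *: 'X_[a]]addr0 hF F0 addr0.
Qed.

Lemma lin_islin d d' (phi : 'X_{1..d} -> {mpoly R[d']}) : islin (lin phi).
Proof. by move=> c f g; exact: linDZ. Qed.

Lemma lin_id d (f : {mpoly R[d]}) : lin (fun a => 'X_[a]) f = f.
Proof. by rewrite /lin -mpolyE. Qed.

Lemma mcoeff_lin d d' (phi : 'X_{1..d} -> {mpoly R[d']}) f m :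
  (lin phi f)@_m = \sum_(a <- msupp f) f@_a * (phi a)@_m.
Proof. by rewrite /lin (big_morph _ (@mcoeffD _ _ m) (@mcoeff0 _ _ m)); apply: eq_bigr => a _; rewrite mcoeffZ. Qed.

Lemma msupp_lin d d' (phi : 'X_{1..d} -> {mpoly R[d']}) f (Q : pred 'X_{1..d'}) :
  (forall a, a \in msupp f -> all Q (msupp (phi a))) -> all Q (msupp (lin phi f)).
Proof.
move=> h; apply/allP => m /msupp_sum_le /flattenP [s /mapP [a ha ->]] /msuppZ_le hm.
by rewrite mem_filter in ha; case/andP: ha => _ /h /allP; apply.
Qed.

End Lin.


Lemma fact_ndvd p m : prime p -> (m < p)%N -> ~~ (p %| m`!)%N.
Proof.
move=> pp; elim: m => [|m IH] hm; first by rewrite fact0 dvdn1; apply/eqP => p1; move: (prime_gt1 pp); rewrite p1.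
rewrite factS Euclid_dvdM // negb_or IH ?(ltnW hm) // andbT.
by apply/negP => /(dvdn_leq (ltn0Sn m)); rewrite leqNgt hm.
Qed.

Lemma bin_ndvd p r m : prime p -> (r < p)%N -> (m <= r)%N -> ~~ (p %| 'C(r, m))%N.
Proof.
move=> pp hr hm; apply/negP => h; have := fact_ndvd pp hr.
by rewrite -(bin_fact hm) (dvdn_mulr _ h).
Qed.

Lemma sum_nat_single (V : nmodType) N j (F : nat -> V) :
  (forall i, (i < N)%N -> i != j -> F i = 0) ->
  \sum_(0 <= i < N) F i = if (j < N)%N then F j else 0.
Proof.
move=> h; case: ifP => hj.
  rewrite (bigD1_seq j) ?mem_index_iota ?hj ?iota_uniq //= big1_seq ?addr0 // => i /andP [ij].
  by rewrite mem_index_iota => /andP [_ /h]; apply.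
rewrite big1_seq // => i /andP [_]; rewrite mem_index_iota => /andP [_ hi].
by apply: h => //; apply/eqP => ij; rewrite -ij hi in hj.
Qed.

Lemma sum_ord_single (V : nmodType) N j (F : nat -> V) :
  (forall i, (i < N)%N -> i != j -> F i = 0) ->
  \sum_(i < N) F i = if (j < N)%N then F j else 0.
Proof. by move=> h; rewrite -(big_mkord xpredT F) (sum_nat_single (j := j)). Qed.

Section Char.
Variables (R : comNzRingType) (p : nat).
Hypothesis charR : p \in [pchar R].

Let pp : prime p. Proof. exact: pcharf_prime charR. Qed.
Let p_gt0 : (0 < p)%N. Proof. exact: prime_gt0 pp. Qed.

Lemma coef1Xn n m : ((1 + 'X : {poly R}) ^+ n)`_m = ('C(n, m))%:R.
Proof.
rewrite exprDn coef_sum.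
rewrite (sum_ord_single (j := m) (F := fun i : nat => ((1 ^+ (n - i) * 'X ^+ i) *+ 'C(n, i))`_m)); last by move=> i _ im; rewrite expr1n mul1r coefMn coefXn eq_sym (negbTE im) mul0rn.
case: ifP => hm; first by rewrite expr1n mul1r coefMn coefXn eqxx mulr1n.
by rewrite bin_small // ltnNge -ltnS hm.
Qed.

Lemma lucas n m : ('C(n, m))%:R = ('C(n %/ p, m %/ p) * 'C(n %% p, m %% p))%:R :> R.
Proof.
have chP : p \in [pchar {poly R}] by rewrite pchar_poly.
have Fr : (1 + 'X : {poly R}) ^+ p = 1 + 'X ^+ p.
  rewrite exprDn_pchar ?expr1n //.
  by rewrite (eq_pnat _ (pcharf_eq chP)) pnat_id.
rewrite -coef1Xn {1}(divn_eq n p) exprD mulnC exprM Fr.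
rewrite exprDn mulr_suml coef_sum.
rewrite (sum_ord_single (j := (m %/ p)%N) (F := fun i : nat => ((1 ^+ (n %/ p - i)%N * ('X ^+ p) ^+ i) *+ 'C(n %/ p, i) * (1 + 'X) ^+ (n %% p)%N)`_m)); last first.
  move=> i _ im; rewrite expr1n mul1r mulrnAl coefMn -exprM coefXnM coef1Xn.
  case: (ltnP m (p * i)) => h1; first by rewrite mul0rn.
  rewrite bin_small ?mul0rn //.
  have hs : (n %% p < p)%N by rewrite ltn_mod.
  apply: (leq_trans hs); rewrite leq_subRL //.
  case: (ltngtP i (m %/ p)) im => // [hi|hi] _.
    by rewrite [X in (_ <= X)%N](divn_eq m p) (leq_trans _ (leq_addr _ _)) // -mulnSr mulnC leq_mul2r hi orbT.
  exfalso; move: h1; rewrite leqNgt => /negP; apply.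
  by rewrite mulnC (leq_trans (ltn_ceil m p_gt0)) // leq_mul2r hi orbT.
case: ifP => hm.
  rewrite expr1n mul1r mulrnAl coefMn -exprM coefXnM coef1Xn.
  have -> : (m < p * (m %/ p))%N = false by rewrite mulnC ltnNge leq_trunc_div.
  have -> : (m - p * (m %/ p) = m %% p)%N by rewrite [X in (X - _)%N](divn_eq m p) mulnC addKn.
  by rewrite mulnC natrM mulr_natr.
move/negbT: hm; rewrite -leqNgt => hm.
by rewrite bin_small ?mul0n.
Qed.

Lemma binD_mod a b : ('C(a + b, a))%:R =
  (if (a %% p + b %% p < p)%N then 'C(a %% p + b %% p, a %% p) * 'C(a %/ p + b %/ p, a %/ p) else 0)%:R :> R.
Proof.
rewrite lucas divnD // modnD //; case: ltnP => h /=.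
  by rewrite addn0 mul0n subn0 mulnC.
rewrite mul1n (@bin_small (_ - p)) ?muln0 //.
by rewrite ltn_subLR // addnC ltn_add2r ltn_mod.
Qed.

Lemma bin_mod_ndvd a m : (m <= a %% p)%N -> ('C(a, m))%:R != 0 :> R.
Proof.
move=> hm; have mp : (m < p)%N by rewrite (leq_ltn_trans hm) // ltn_mod.
rewrite lucas (divn_small mp) (modn_small mp) bin0 mul1n.
by rewrite -(dvdn_pcharf charR) bin_ndvd // ltn_mod.
Qed.

Lemma fact_neq0 m : (m < p)%N -> (m`!)%:R != 0 :> R.
Proof. by move=> mp; rewrite -(dvdn_pcharf charR) fact_ndvd. Qed.

End Char.


Section Mnm.
Variable d : nat.
Implicit Types a b : 'X_{1..d}.

Lemma mfst_mjoin a b : mfst (mjoin a b) = a.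
Proof.
apply/mnmP => i; rewrite /mfst /mjoin !mnmE.
by rewrite -[lshift d i]/(unsplit (inl i)) unsplitK.
Qed.

Lemma msnd_mjoin a b : msnd (mjoin a b) = b.
Proof.
apply/mnmP => i; rewrite /msnd /mjoin !mnmE.
by rewrite -[rshift d i]/(unsplit (inr i)) unsplitK.
Qed.

Lemma mjoinK (m : 'X_{1..d + d}) : mjoin (mfst m) (msnd m) = m.
Proof.
apply/mnmP => i; rewrite /mjoin /mfst /msnd mnmE.
by rewrite -{2}(splitK i); case: (split i) => j /=; rewrite mnmE.
Qed.

Lemma mjoin_inj a b a' b' : mjoin a b = mjoin a' b' -> a = a' /\ b = b'.
Proof.
by move=> h; split; [rewrite -(mfst_mjoin a b) h mfst_mjoin | rewrite -(msnd_mjoin a b) h msnd_mjoin].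
Qed.

Lemma mjoin0 : mjoin (0%MM : 'X_{1..d}) 0%MM = 0%MM.
Proof. by apply/mnmP => i; rewrite /mjoin !mnmE; case: split => j; rewrite mnmE. Qed.

Lemma mjoinD a b a' b' : mjoin (a + a') (b + b') = (mjoin a b + mjoin a' b')%MM.
Proof. by apply/mnmP => i; rewrite /mjoin !mnmE; case: split => j; rewrite mnmE. Qed.

Lemma mdeg_mjoin a b : mdeg (mjoin a b) = (mdeg a + mdeg b)%N.
Proof.
by rewrite -{1}(mjoinK (mjoin a b)) mfst_mjoin msnd_mjoin !mdegE big_split_ord /= ; congr (_ + _)%N;
  apply: eq_bigr => i _; rewrite /mjoin mnmE; [rewrite -[lshift d i]/(unsplit (inl i)) | rewrite -[rshift d i]/(unsplit (inr i))]; rewrite unsplitK.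
Qed.

End Mnm.


Section Struct.
Variable R : comNzRingType.

Lemma lin_zero d d' f : lin (fun _ : 'X_{1..d} => (0 : {mpoly R[d']})) f = 0.
Proof. by rewrite /lin big1 // => a _; rewrite scaler0. Qed.

Lemma islin_comp d d' F (hF : @islin R d d' F) d0 (phi : 'X_{1..d0} -> _) f :
  F (lin phi f) = lin (fun a => F (phi a)) f.
Proof.
rewrite (linE _ hF) lin_comp; apply: eq_lin => a _; by rewrite -(linE _ hF).
Qed.

Lemma dpmulE d (f g : {mpoly R[d]}) :
  dpmul f g = lin (fun a => lin (fun b => (dpc a b)%:R *: 'X_[(a + b)%MM]) g) f.
Proof.
rewrite /dpmul /lin; apply: eq_bigr => a _; rewrite scaler_sumr; apply: eq_bigr => b _.
by rewrite !scalerA mulr_natr.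
Qed.

Lemma dpmulXX d (a b : 'X_{1..d}) : dpmul 'X_[R, a] 'X_[b] = (dpc a b)%:R *: 'X_[(a + b)%MM].
Proof. by rewrite dpmulE !linX. Qed.

Lemma dpmul_islinl d (g : {mpoly R[d]}) : islin (fun f => dpmul f g).
Proof. by move=> c f h; rewrite !dpmulE linDZ. Qed.

Lemma dpmul_islinr d (f : {mpoly R[d]}) : islin (dpmul f).
Proof. by move=> c g h; rewrite !dpmulE -lin_phiDZ; apply: eq_lin => a _; rewrite linDZ. Qed.

Lemma tensE d (u v : {mpoly R[d]}) :
  tens u v = lin (fun a => lin (fun b => 'X_[mjoin a b]) v) u.
Proof.
rewrite /tens /lin; apply: eq_bigr => a _; rewrite scaler_sumr; apply: eq_bigr => b _.
by rewrite scalerA.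
Qed.

Lemma tensXX d (a b : 'X_{1..d}) : tens 'X_[R, a] 'X_[b] = 'X_[mjoin a b].
Proof. by rewrite tensE !linX. Qed.

Lemma tens_islinl d (v : {mpoly R[d]}) : islin (fun u => tens u v).
Proof. by move=> c f h; rewrite !tensE linDZ. Qed.

Lemma tens_islinr d (u : {mpoly R[d]}) : islin (tens u).
Proof. by move=> c g h; rewrite !tensE -lin_phiDZ; apply: eq_lin => a _; rewrite linDZ. Qed.

Lemma tmulE d p (t s : {mpoly R[d + d]}) :
  tmul p t s = lin (fun a => lin (fun b =>
    tens (qtrunc p ('X_[mfst a] * 'X_[mfst b])) (dpmul 'X_[msnd a] 'X_[msnd b])) s) t.
Proof.
rewrite /tmul /lin; apply: eq_bigr => a _; rewrite scaler_sumr; apply: eq_bigr => b _.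
by rewrite scalerA.
Qed.

Lemma tmul_islinl d p (s : {mpoly R[d + d]}) : islin (fun t => tmul p t s).
Proof. by move=> c f h; rewrite !tmulE linDZ. Qed.

Lemma tmul_islinr d p (t : {mpoly R[d + d]}) : islin (tmul p t).
Proof. by move=> c g h; rewrite !tmulE -lin_phiDZ; apply: eq_lin => a _; rewrite linDZ. Qed.

Definition qtp d p (a : 'X_{1..d}) := all (fun i => a i < p)%N (enum 'I_d).

Lemma qtruncE d p (f : {mpoly R[d]}) :
  qtrunc p f = lin (fun a => if qtp p a then 'X_[a] else 0) f.
Proof.
rewrite /qtrunc /lin big_mkcond; apply: eq_bigr => a _.
by rewrite /qtp; case: ifP; rewrite ?scaler0.
Qed.

Lemma qtruncX d p (a : 'X_{1..d}) : qtrunc p 'X_[R, a] = if qtp p a then 'X_[a] else 0.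
Proof. by rewrite qtruncE linX. Qed.

Lemma qtrunc_islin d p : islin (@qtrunc R d p).
Proof. by move=> c f g; rewrite !qtruncE linDZ. Qed.

Lemma qtpP d p (a : 'X_{1..d}) : reflect (forall i, a i < p)%N (qtp p a).
Proof.
apply: (iffP allP) => h i; first by apply: h; rewrite mem_enum.
by move=> _; apply: h.
Qed.

End Struct.


Section CharP.
Variables (R : comNzRingType) (p : nat).
Hypothesis charR : p \in [pchar R].
Variable ifc : nat -> R.
Hypothesis ifcK : forall m, (m < p)%N -> ifc m * (m`!)%:R = 1.

Let pp : prime p. Proof. exact: pcharf_prime charR. Qed.
Let p_gt0 : (0 < p)%N. Proof. exact: prime_gt0 pp. Qed.
Let p_gt1 : (1 < p)%N. Proof. exact: prime_gt1 pp. Qed.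

Definition res d (a : 'X_{1..d}) := (\sum_(i < d) (a i %% p))%N.
Definition amod d (a : 'X_{1..d}) := [multinom (a i %% p)%N | i < d].
Definition adiv d (a : 'X_{1..d}) := [multinom (a i %/ p)%N | i < d].
Definition ifcm d (s : 'X_{1..d}) : R := \prod_(i < d) ifc (s i).
Definition psiG d n (f : {mpoly R[d]}) : {mpoly R[d + d]} :=
  lin (fun a => if res a == n then ifcm (amod a) *: 'X_[mjoin (amod a) (adiv a)] else 0) f.
Definition J d n (f : {mpoly R[d]}) := all (fun a => n <= res a)%N (msupp f).
Definition nc d (a b : 'X_{1..d}) := [forall i, (a i %% p + b i %% p < p)%N].

Lemma amod_adiv d (a : 'X_{1..d}) : (amod a + adiv a *+ p)%MM = a.
Proof. by apply/mnmP => i; rewrite mnmDE mulmnE !mnmE addnC -divn_eq. Qed.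

Lemma mdeg_amod d (a : 'X_{1..d}) : mdeg (amod a) = res a.
Proof. by rewrite mdegE; apply: eq_bigr => i _; rewrite mnmE. Qed.

Lemma qtp_amod d (a : 'X_{1..d}) : qtp p (amod a).
Proof. by apply/qtpP => i; rewrite mnmE ltn_mod. Qed.

Lemma amod_small d (s t : 'X_{1..d}) : qtp p s -> amod (s + t *+ p)%MM = s.
Proof.
move/qtpP => h; apply/mnmP => i; rewrite mnmE mnmDE mulmnE.
by rewrite addnC modnMDl modn_small.
Qed.

Lemma adiv_small d (s t : 'X_{1..d}) : qtp p s -> adiv (s + t *+ p)%MM = t.
Proof.
move/qtpP => h; apply/mnmP => i; rewrite mnmE mnmDE mulmnE.
by rewrite addnC divnMDl // divn_small // addn0.
Qed.

Lemma res_small d (s t : 'X_{1..d}) : qtp p s -> res (s + t *+ p)%MM = mdeg s.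
Proof. by move=> h; rewrite -mdeg_amod amod_small. Qed.

Lemma mdeg_split d (a : 'X_{1..d}) : mdeg a = (res a + p * mdeg (adiv a))%N.
Proof.
rewrite -{1}(amod_adiv a) mdegD mdegMn mdeg_amod mulnC //.
Qed.

Lemma res_ge_mod d (a : 'X_{1..d}) : (mdeg a %% p <= res a)%N.
Proof.
rewrite mdegE /res -modn_summ; exact: leq_mod.
Qed.

Lemma ncP d (a b : 'X_{1..d}) : reflect (forall i, a i %% p + b i %% p < p)%N (nc a b).
Proof. exact: forallP. Qed.

Lemma nc_amod d (a b : 'X_{1..d}) : nc a b -> amod (a + b)%MM = (amod a + amod b)%MM.
Proof.
move/ncP => h; apply/mnmP => i; rewrite !mnmE modnD //.
by rewrite leqNgt h mul0n subn0.
Qed.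

Lemma nc_adiv d (a b : 'X_{1..d}) : nc a b -> adiv (a + b)%MM = (adiv a + adiv b)%MM.
Proof.
move/ncP => h; apply/mnmP => i; rewrite !mnmE divnD //.
by rewrite leqNgt h addn0.
Qed.

Lemma nc_res d (a b : 'X_{1..d}) : nc a b -> res (a + b)%MM = (res a + res b)%N.
Proof. by move=> h; rewrite -!mdeg_amod nc_amod // mdegD. Qed.

Lemma nc_qtp d (a b : 'X_{1..d}) : qtp p (amod a + amod b)%MM = nc a b.
Proof.
apply/qtpP/ncP => h i; have := h i; by rewrite mnmDE !mnmE.
Qed.

Lemma dpc_mod d (a b : 'X_{1..d}) : (dpc a b)%:R =
  (if nc a b then (dpc (amod a) (amod b) * dpc (adiv a) (adiv b))%N else 0%N)%:R :> R.
Proof.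
rewrite /dpc natr_prod; case: ifP => h.
  rewrite natrM !natr_prod -big_split /=; apply: eq_bigr => i _.
  rewrite (binD_mod charR) !mnmE; move/ncP: h => h; by rewrite h natrM.
move/negbT: h; rewrite negb_forall => /existsP [i hi].
rewrite (bigD1 i) //= (binD_mod charR) (negbTE hi) mul0r //.
Qed.

Lemma ifcD x y : (x + y < p)%N -> ifc (x + y) * ('C(x + y, x))%:R = ifc x * ifc y.
Proof.
move=> h.
have hx : (x < p)%N by apply: leq_ltn_trans h; apply: leq_addr.
have hy : (y < p)%N by apply: leq_ltn_trans h; apply: leq_addl.
have e : ('C(x + y, x) * (x`! * y`!))%N = (x + y)`!.
  by have := bin_fact (leq_addr y x); rewrite addKn.
transitivity (ifc (x + y) * ('C(x + y, x))%:R * ((ifc x * (x`!)%:R) * (ifc y * (y`!)%:R))).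
  by rewrite !ifcK // !mulr1.
transitivity ((ifc (x + y) * ((x + y)`!)%:R) * (ifc x * ifc y)); last by rewrite ifcK // mul1r.
by rewrite -e !natrM; ring.
Qed.

Lemma ifcmD d (a b : 'X_{1..d}) : nc a b ->
  ifcm (amod a + amod b)%MM * (dpc (amod a) (amod b))%:R = ifcm (amod a) * ifcm (amod b).
Proof.
move/ncP => h; rewrite /ifcm /dpc natr_prod -!big_split /=; apply: eq_bigr => i _.
by rewrite mnmDE ifcD // !mnmE.
Qed.

Lemma psiGX d n (a : 'X_{1..d}) : psiG n 'X_[a] =
  if res a == n then ifcm (amod a) *: 'X_[mjoin (amod a) (adiv a)] else 0.
Proof. by rewrite /psiG linX. Qed.

Lemma psiG_islin d n : islin (@psiG d n).
Proof. by move=> c f g; rewrite /psiG linDZ. Qed.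

Lemma J0 d n : J n (0 : {mpoly R[d]}).
Proof. by rewrite /J msupp0. Qed.

Lemma JD d n (f g : {mpoly R[d]}) : J n f -> J n g -> J n (f + g).
Proof.
move=> /allP hf /allP hg; apply/allP => a /msuppD_le; rewrite mem_cat => /orP [/hf|/hg] //.
Qed.

Lemma JZ d n c (f : {mpoly R[d]}) : J n f -> J n (c *: f).
Proof. by move=> /allP hf; apply/allP => a /msuppZ_le /hf. Qed.

Lemma J_sum d n I (r : seq I) (P : pred I) (F : I -> {mpoly R[d]}) :
  (forall i, P i -> J n (F i)) -> J n (\sum_(i <- r | P i) F i).
Proof. by move=> h; apply: (big_ind (J n)) => //; [exact: J0 | exact: JD]. Qed.

Lemma JX d n (a : 'X_{1..d}) : (n <= res a)%N -> J n 'X_[a].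
Proof. by move=> h; rewrite /J msuppX /= h. Qed.

Lemma J_le d n m (f : {mpoly R[d]}) : (n <= m)%N -> J m f -> J n f.
Proof. by move=> nm /allP h; apply/allP => a /h /(leq_trans nm). Qed.

Lemma JP d n (f : {mpoly R[d]}) : J n f -> f = lin (fun a => 'X_[a]) f /\ forall a, a \in msupp f -> (n <= res a)%N.
Proof. by move=> /allP h; split => //; rewrite lin_id. Qed.

Lemma J_dpmul d n m (f g : {mpoly R[d]}) : J n f -> J m g -> J (n + m) (dpmul f g).
Proof.
move=> /allP hf /allP hg; rewrite dpmulE; apply: msupp_lin => a /hf ha.
apply: msupp_lin => b /hg hb.
rewrite dpc_mod; case: ifP => h; last by rewrite scale0r msupp0.
apply/allP => m0 /msuppZ_le; rewrite msuppX inE => /eqP ->.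
by rewrite nc_res // leq_add.
Qed.

Lemma psiG_J d n (f : {mpoly R[d]}) : J n.+1 f -> psiG n f = 0.
Proof.
move=> /allP h; rewrite /psiG /lin big1_seq // => a /h ha.
by rewrite ifN ?scaler0 //; apply/eqP => e; rewrite e ltnn in ha.
Qed.

End CharP.


Section Lin2.
Variable R : comNzRingType.
Lemma islin0 d d' (F : {mpoly R[d]} -> {mpoly R[d']}) : islin F -> F 0 = 0.
Proof. by move=> hF; rewrite (linE _ hF) lin0. Qed.
Lemma islinZ d d' (F : {mpoly R[d]} -> {mpoly R[d']}) c x : islin F -> F (c *: x) = c *: F x.
Proof. by move=> hF; rewrite (linE _ hF) linZ -(linE _ hF). Qed.
Lemma islinD d d' (F : {mpoly R[d]} -> {mpoly R[d']}) x y : islin F -> F (x + y) = F x + F y.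
Proof. by move=> hF; rewrite (linE _ hF) linD -!(linE _ hF). Qed.
Lemma islin_sum d d' (F : {mpoly R[d]} -> {mpoly R[d']}) I (r : seq I) (P : pred I) G :
  islin F -> F (\sum_(i <- r | P i) G i) = \sum_(i <- r | P i) F (G i).
Proof. by move=> hF; rewrite (linE _ hF) lin_sum; apply: eq_bigr => i _; rewrite -(linE _ hF). Qed.
End Lin2.

Section Mult.
Variables (R : comNzRingType) (p : nat).
Hypothesis charR : p \in [pchar R].
Variable ifc : nat -> R.
Hypothesis ifcK : forall m, (m < p)%N -> ifc m * (m`!)%:R = 1.

Let pp : prime p. Proof. exact: pcharf_prime charR. Qed.
Let p_gt0 : (0 < p)%N. Proof. exact: prime_gt0 pp. Qed.

Local Notation psiG := (psiG p ifc).
Local Notation res := (res p).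
Local Notation amod := (amod p).
Local Notation adiv := (adiv p).
Local Notation nc := (nc p).
Local Notation ifcm := (ifcm ifc).
Local Notation J := (J p).

Lemma tmulXX d (r q r' q' : 'X_{1..d}) :
  tmul p 'X_[R, mjoin r q] 'X_[mjoin r' q'] =
  tens (qtrunc p 'X_[(r + r')%MM]) ((dpc q q')%:R *: 'X_[(q + q')%MM]).
Proof. by rewrite tmulE !linX !mfst_mjoin !msnd_mjoin mpolyXD dpmulXX. Qed.

Lemma tmul0l d (s : {mpoly R[d + d]}) : tmul p 0 s = 0.
Proof. exact: islin0 (tmul_islinl _ _). Qed.
Lemma tmul0r d (t : {mpoly R[d + d]}) : tmul p t 0 = 0.
Proof. exact: islin0 (tmul_islinr _ _). Qed.
Lemma tens0l d (v : {mpoly R[d]}) : tens 0 v = 0.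
Proof. exact: islin0 (tens_islinl _). Qed.

Lemma psiG_mulXX d n m (a b : 'X_{1..d}) : (n <= res a)%N -> (m <= res b)%N ->
  psiG (n + m) (dpmul 'X_[a] 'X_[b]) = tmul p (psiG n 'X_[a]) (psiG m 'X_[b]).
Proof.
move=> ha hb; rewrite dpmulXX (islinZ _ _ (psiG_islin p ifc _)) !psiGX.
case: (boolP (nc a b)) => hnc; last first.
  rewrite (dpc_mod charR) (negbTE hnc) scale0r.
  case: eqP => ea; last by rewrite tmul0l.
  case: eqP => eb; last by rewrite tmul0r.
  rewrite (islinZ _ _ (tmul_islinl _ _)) (islinZ _ _ (tmul_islinr _ _)) tmulXX qtruncX.
  by rewrite nc_qtp (negbTE hnc) tens0l !scaler0.
rewrite (nc_res charR hnc).
case: (eqVneq (res a) n) => ea; last first.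
  rewrite tmul0l ifN ?scaler0 //; apply/negP => /eqP e.
  by move: ea; rewrite eqn_leq ha andbT -(leq_add2r (res b)) e leq_add2l hb.
case: (eqVneq (res b) m) => eb; last first.
  rewrite tmul0r ifN ?scaler0 //; apply/negP => /eqP e.
  by move: eb; rewrite eqn_leq hb andbT -(leq_add2l (res a)) e leq_add2r ha.
rewrite ea eb eqxx (nc_amod charR hnc) (nc_adiv charR hnc).
rewrite (islinZ _ _ (tmul_islinl _ _)) (islinZ _ _ (tmul_islinr _ _)) tmulXX qtruncX.
rewrite nc_qtp hnc (islinZ _ _ (tens_islinr _)) tensXX !scalerA mjoinD.
congr (_ *: _); rewrite (dpc_mod charR) hnc natrM -(ifcmD ifcK hnc).
by ring.
Qed.

Lemma psiG_dpmul d n m (f g : {mpoly R[d]}) : J n f -> J m g ->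
  psiG (n + m) (dpmul f g) = tmul p (psiG n f) (psiG m g).
Proof.
move=> /allP hf /allP hg.
rewrite dpmulE (islin_comp (psiG_islin p ifc _)) {2}/psiG.
rewrite (islin_comp (tmul_islinl _ _)); apply: eq_lin => a /hf ha.
rewrite (islin_comp (psiG_islin p ifc _)) {2}/psiG (islin_comp (tmul_islinr _ _)).
apply: eq_lin => b /hg hb.
by rewrite -!psiGX -dpmulXX psiG_mulXX.
Qed.

Lemma ifcm0 d : ifcm (0%MM : 'X_{1..d}) = 1.
Proof.
rewrite /ifcm big1 // => i _; rewrite mnm0E.
by have := ifcK p_gt0; rewrite fact0 mulr1.
Qed.

Lemma psiG1 d : psiG 0 (1 : {mpoly R[d]}) = 1.
Proof.
rewrite -mpolyX0 psiGX.
have -> : amod 0%MM = 0%MM :> 'X_{1..d} by apply/mnmP => i; rewrite !mnmE mod0n.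
have -> : adiv 0%MM = 0%MM :> 'X_{1..d} by apply/mnmP => i; rewrite !mnmE div0n.
rewrite -mdeg_amod.
have -> : amod 0%MM = 0%MM :> 'X_{1..d} by apply/mnmP => i; rewrite !mnmE mod0n.
by rewrite mdeg0 eqxx ifcm0 scale1r mjoin0 mpolyX0.
Qed.

End Mult.


Definition cnt d (l : seq 'I_d) : 'X_{1..d} := (\sum_(i <- l) U_(i))%MM.

Lemma cnt_cons d (i : 'I_d) l : cnt (i :: l) = (U_(i) + cnt l)%MM.
Proof. by rewrite /cnt big_cons. Qed.

Lemma mdeg_cnt d (l : seq 'I_d) : mdeg (cnt l) = size l.
Proof. by rewrite /cnt mdeg_sum -sum1_size; apply: eq_bigr => i _; rewrite mdeg1. Qed.

Section IpowJ.
Variables (R : comNzRingType) (p : nat).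
Hypothesis charR : p \in [pchar R].
Let pp : prime p. Proof. exact: pcharf_prime charR. Qed.
Let p_gt1 : (1 < p)%N. Proof. exact: prime_gt1 pp. Qed.

Lemma res_U d (i : 'I_d) : res p U_(i)%MM = 1%N.
Proof.
rewrite /res (bigD1 i) //= mnm1E eqxx modn_small // big1 ?addn0 // => j ji.
by rewrite mnm1E eq_sym (negbTE ji) mod0n.
Qed.

Lemma J_dpprodU d (l : seq 'I_d) : J p (size l) (dpprod [seq 'X_[R, U_(i)] | i <- l]).
Proof.
elim: l => [|i l IH] /=; first by rewrite -mpolyX0; apply: JX.
rewrite -add1n; apply: (J_dpmul charR) => //; apply: JX; by rewrite res_U.
Qed.

Lemma Ipow_J d n (f : {mpoly R[d]}) : Ipow n f -> J p n f.
Proof.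
case=> s ->; apply: J_sum => t _; apply: JZ; apply: (J_le (m := (0 + n)%N)) => //.
apply: (J_dpmul charR); first by apply: JX.
by have := J_dpprodU (tval t.1.2); rewrite size_tuple.
Qed.

End IpowJ.

Section JIpow.
Variables (k : fieldType) (p : nat).
Hypothesis charp : p \in [pchar k].
Let pp : prime p. Proof. exact: pcharf_prime charp. Qed.
Let p_gt1 : (1 < p)%N. Proof. exact: prime_gt1 pp. Qed.
Let p_gt0 : (0 < p)%N. Proof. exact: prime_gt0 pp. Qed.

Lemma dpprodU d (l : seq 'I_d) : dpprod [seq 'X_[k, U_(i)] | i <- l] =
  (\prod_(j < d) (cnt l j)`!)%:R *: 'X_[cnt l].
Proof.
elim: l => [|i l IH] /=.
  rewrite /cnt big_nil big1 ?scale1r ?mpolyX0 // => j _; by rewrite mnm0E.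
rewrite IH (islinZ _ _ (dpmul_islinr _)) dpmulXX scalerA -natrM cnt_cons.
congr (_%:R *: _); rewrite /dpc -big_split /=; apply: eq_bigr => j _.
rewrite mnmDE mnm1E; case: (i == j); last by rewrite bin0 muln1.
by rewrite add1n bin1 factS mulnC.
Qed.

Lemma exists_cnt d (a : 'X_{1..d}) n : (n <= res p a)%N ->
  exists l : seq 'I_d, size l = n /\ forall j, (cnt l j <= a j %% p)%N.
Proof.
elim: n => [|n IH] h; first by exists [::] => //; split => // j; rewrite /cnt big_nil mnm0E.
have [l [sl hl]] := IH (ltnW h).
have [j hj] : exists j, (cnt l j < a j %% p)%N.
  case: (boolP [exists j, (cnt l j < a j %% p)%N]) => [/existsP //|]; rewrite negb_exists => /forallP hn.
  have : (res p a <= n)%N.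
    rewrite -sl -mdeg_cnt mdegE /res; apply: leq_sum => j _.
    by rewrite leqNgt; apply: hn.
  by rewrite leqNgt h.
exists (j :: l); split; first by rewrite /= sl.
move=> j'; rewrite cnt_cons mnmDE mnm1E; case: eqP => [<-|_]; first by rewrite add1n.
by rewrite add0n.
Qed.

Lemma IpowX d n (a : 'X_{1..d}) : (n <= res p a)%N -> Ipow n 'X_[k, a].
Proof.
move=> /exists_cnt [l [sl hl]].
have hsz : size l == n by rewrite sl.
set t : n.-tuple 'I_d := Tuple hsz.
have cle : (cnt l <= a)%MM by apply/mnm_lepP => j; apply: leq_trans (hl j) (leq_mod _ _).
set b := (a - cnt l)%MM.
set c : k := (\prod_(j < d) (cnt l j)`!)%:R * (dpc b (cnt l))%:R.
have c0 : c != 0.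
  rewrite mulf_neq0 // /dpc natr_prod; apply/prodf_neq0 => j _.
    by apply: (fact_neq0 charp); rewrite (leq_ltn_trans (hl j)) // ltn_mod.
  have hj : (cnt l j <= a j)%N by rewrite (leq_trans (hl j)) // leq_mod.
  by rewrite /b mnmBE subnK // bin_sub // (bin_mod_ndvd charp).
exists [:: (b, t, c^-1)]; rewrite big_seq1 /=.
rewrite dpprodU (islinZ _ _ (dpmul_islinr _)) dpmulXX scalerA /b submK //.
by rewrite scalerA mulVf // scale1r.
Qed.

Lemma Ipow0 d n : Ipow n (0 : {mpoly k[d]}).
Proof. by exists [::]; rewrite big_nil. Qed.

Lemma IpowD d n (f g : {mpoly k[d]}) : Ipow n f -> Ipow n g -> Ipow n (f + g).
Proof. by case=> s -> [s' ->]; exists (s ++ s'); rewrite big_cat. Qed.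

Lemma IpowZ d n c (f : {mpoly k[d]}) : Ipow n f -> Ipow n (c *: f).
Proof.
case=> s ->; exists [seq (t.1, c * t.2) | t <- s].
by rewrite big_map scaler_sumr; apply: eq_bigr => t _; rewrite scalerA.
Qed.

Lemma J_Ipow d n (f : {mpoly k[d]}) : J p n f -> Ipow n f.
Proof.
move=> /allP h; rewrite {1}(mpolyE f) big_seq.
apply: (big_ind (@Ipow k d n)); [exact: Ipow0 | exact: IpowD |].
by move=> a /h ha; apply: IpowZ; exact: IpowX.
Qed.

End JIpow.


Lemma mjoin_eq d (a b s t : 'X_{1..d}) : (mjoin a b == mjoin s t) = (a == s) && (b == t).
Proof.
apply/eqP/andP => [/mjoin_inj [-> ->] //|[/eqP -> /eqP ->] //].
Qed.

Section Helpers.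
Variable R : comNzRingType.

Definition cpow e (c : 'I_e -> R) (b : 'X_{1..e}) : R := \prod_(j < e) c j ^+ b j.
Definition lf e (c : 'I_e -> R) : {mpoly R[e]} := \sum_(j < e) c j *: 'X_j.

Lemma bsum_single (V : nmodType) e N (P : pred 'X_{1..e}) (F : 'X_{1..e} -> V) m0 :
  (forall b, b != m0 -> F b = 0) ->
  \sum_(b : 'X_{1..e < N} | P b) F b = if (mdeg m0 < N)%N && P m0 then F m0 else 0.
Proof.
move=> h; case: ifP => [/andP [hm hP]|hn].
  rewrite (bigD1 (BMultinom hm)) //= big1 ?addr0 // => b /andP [_ hb].
  by apply: h; apply: contra hb => /eqP e0; apply/eqP; apply: val_inj.
rewrite big1 // => b hb; apply: h; apply/eqP => e0.
by move: hn; rewrite -e0 bmdeg hb.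
Qed.

Lemma mcoeffXM e (u : 'X_{1..e}) (S : {mpoly R[e]}) m :
  ('X_[u] * S)@_m = if (u <= m)%MM then S@_(m - u)%MM else 0.
Proof.
case: ifP => h.
  by rewrite mulrC -{1}(submK h) addmC mcoeffMX.
rewrite {1}(mpolyE S) mulr_sumr (big_morph _ (@mcoeffD _ _ m) (@mcoeff0 _ _ m)).
rewrite big1 // => b _; rewrite -scalerAr -mpolyXD mcoeffZ mcoeffX.
case: eqP => [e0|]; last by rewrite mulr0.
by move: h; rewrite -e0 lem_addr.
Qed.

Lemma cpow0 e (c : 'I_e -> R) : cpow c 0%MM = 1.
Proof. by rewrite /cpow big1 // => j _; rewrite mnm0E expr0. Qed.

Lemma cpowD e (c : 'I_e -> R) a b : cpow c (a + b)%MM = cpow c a * cpow c b.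
Proof. by rewrite /cpow -big_split; apply: eq_bigr => j _; rewrite mnmDE exprD. Qed.

Lemma cpowMn e (c : 'I_e -> R) a n : cpow c (a *+ n)%MM = cpow (fun j => c j ^+ n) a.
Proof. by rewrite /cpow; apply: eq_bigr => j _; rewrite mulmnE mulnC exprM. Qed.

Lemma cpowU e (c : 'I_e -> R) j : cpow c U_(j)%MM = c j.
Proof.
rewrite /cpow (bigD1 j) //= big1 ?mulr1 => [|i ij]; first by rewrite mnm1E eqxx expr1.
by rewrite mnm1E eq_sym (negbTE ij) expr0.
Qed.

Lemma mcoeff_tens_bsum e N1 N2 (P1 P2 : pred 'X_{1..e}) (w1 w2 : 'X_{1..e} -> R) s t :
  (tens (\sum_(b : 'X_{1..e < N1} | P1 b) w1 b *: 'X_[bmnm b])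
        (\sum_(b : 'X_{1..e < N2} | P2 b) w2 b *: 'X_[bmnm b]))@_(mjoin s t) =
  if ((mdeg s < N1)%N && P1 s) && ((mdeg t < N2)%N && P2 t) then w1 s * w2 t else 0.
Proof.
rewrite (islin_sum _ _ _ (tens_islinl _)) (big_morph _ (@mcoeffD _ _ _) (@mcoeff0 _ _ _)).
under eq_bigr => b _ do rewrite (islinZ _ _ (tens_islinl _)) (islin_sum _ _ _ (tens_islinr _)) mcoeffZ
   (big_morph _ (@mcoeffD _ _ _) (@mcoeff0 _ _ _)).
under eq_bigr => b _ do under eq_bigr => b' _ do rewrite (islinZ _ _ (tens_islinr _)) tensXX mcoeffZ mcoeffX.
rewrite (@bsum_single _ _ N1 P1 (fun b => w1 b * \sum_(b' : 'X_{1..e < N2} | P2 b') w2 b' * (mjoin b b' == mjoin s t)%:R) s); last first.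
  move=> b bs; rewrite big1 ?mulr0 // => b' _; by rewrite mjoin_eq (negbTE bs) mulr0.
rewrite (@bsum_single _ _ N2 P2 (fun b' => w2 b' * (mjoin s b' == mjoin s t)%:R) t); last first.
  move=> b' bt; by rewrite mjoin_eq (negbTE bt) andbF mulr0.
rewrite eqxx mulr1; case: (_ && P1 s) => /=; last by [].
by case: (_ && P2 t) => //=; rewrite mulr0.
Qed.

End Helpers.

Lemma mnm_le_mdeg e (m : 'X_{1..e}) j : (m j <= mdeg m)%N.
Proof. by rewrite mdegE (bigD1 j) //= leq_addr. Qed.

Section Multinom.
Variables (R : comNzRingType) (p : nat).
Hypothesis charR : p \in [pchar R].
Variable ifc : nat -> R.
Hypothesis ifcK : forall m, (m < p)%N -> ifc m * (m`!)%:R = 1.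
Let pp : prime p. Proof. exact: pcharf_prime charR. Qed.
Let p_gt0 : (0 < p)%N. Proof. exact: prime_gt0 pp. Qed.
Local Notation ifcm := (ifcm ifc).

Definition Smul e r (c : 'I_e -> R) : {mpoly R[e]} :=
  \sum_(b : 'X_{1..e < r.+1} | mdeg b == r) (ifcm b * cpow c b) *: 'X_[bmnm b].

Lemma mcoeff_Smul e r (c : 'I_e -> R) m :
  (Smul r c)@_m = if mdeg m == r then ifcm m * cpow c m else 0.
Proof.
rewrite /Smul (big_morph _ (@mcoeffD _ _ m) (@mcoeff0 _ _ m)).
under eq_bigr do rewrite mcoeffZ mcoeffX.
rewrite (@bsum_single _ e r.+1 (fun b => mdeg b == r) (fun b => ifcm b * cpow c b * (b == m)%:R) m) => [|b bm]; last by rewrite (negbTE bm) mulr0.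
by case: eqP => [->|] //=; rewrite ?ltnSn eqxx mulr1 // andbF.
Qed.


Lemma ifc_pred x : (0 < x < p)%N -> ifc x.-1 = x%:R * ifc x.
Proof.
case/andP => x0 xp; have xp' : (x.-1 < p)%N by rewrite (leq_ltn_trans (leq_pred x)).
transitivity (ifc x.-1 * (ifc x * (x`!)%:R)); first by rewrite ifcK // mulr1.
rewrite -(prednK x0) factS natrM prednK //.
transitivity (x%:R * ifc x * (ifc x.-1 * (x.-1`!)%:R)); first by ring.
by rewrite ifcK // mulr1.
Qed.

Lemma ifcm_sub e (m : 'X_{1..e}) j : (U_(j) <= m)%MM -> (forall i, m i < p)%N ->
  ifcm (m - U_(j))%MM = (m j)%:R * ifcm m.
Proof.
move=> hu hp; rewrite /ifcm (bigD1 j) //= [in RHS](bigD1 j) //= mulrA.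
rewrite mnmBE mnm1E eqxx subn1 ifc_pred; last by rewrite hp lt0n -lep1mP hu.
congr (_ * _); apply: eq_bigr => i ij; by rewrite mnmBE mnm1E eq_sym (negbTE ij) subn0.
Qed.

Lemma lf_exp e (c : 'I_e -> R) r : (r < p)%N -> lf c ^+ r = (r`!)%:R *: Smul r c.
Proof.
elim: r => [|r IH] hr.
  apply/mpolyP => m; rewrite expr0 mcoeff1 mcoeffZ mcoeff_Smul fact0 mul1r mdeg_eq0.
  case: eqP => [->|]; rewrite ?mulr0 // (ifcm0 charR ifcK) cpow0 !mulr1 //.
apply/mpolyP => m; rewrite exprS IH ?(ltnW hr) // -scalerAr !mcoeffZ.
rewrite /lf mulr_suml (big_morph _ (@mcoeffD _ _ m) (@mcoeff0 _ _ m)).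
under eq_bigr do rewrite -scalerAl mcoeffZ mcoeffXM.
rewrite mcoeff_Smul.
transitivity ((r`!)%:R * \sum_(j < e) (if mdeg m == r.+1 then (m j)%:R * (ifcm m * cpow c m) else 0)).
  congr (_ * _); apply: eq_bigr => j _.
  case: ifP => hu; last first.
    move/negbT: hu; rewrite lep1mP negbK => /eqP ->; by rewrite mulr0 mul0r if_same.
  have e1 : mdeg m = (mdeg (m - U_(j)) + 1)%N by rewrite -(mdeg1 j) -mdegD submK.
  rewrite mcoeff_Smul e1 addn1 eqSS; case: ifP => // hd; last by rewrite mulr0.
  have hp : forall i, (m i < p)%N.
    by move=> i; rewrite (leq_ltn_trans (mnm_le_mdeg m i)) // e1 addn1 (eqP hd).
  have -> : cpow c m = cpow c (m - U_(j))%MM * c j by rewrite -cpowU -cpowD submK.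
  rewrite ifcm_sub //; ring.
rewrite -big_mkcond /=; case: ifP => hd; last by rewrite big1 ?mulr0.
rewrite -mulr_suml -natr_sum -mdegE (eqP hd) factS natrM; ring.
Qed.

Lemma qtrunc_Smul e r (c : 'I_e -> R) : (r < p)%N -> qtrunc p (Smul r c) = Smul r c.
Proof.
move=> hr; rewrite /Smul (islin_sum _ _ _ (qtrunc_islin p)); apply: eq_bigr => b hb.
rewrite (islinZ _ _ (qtrunc_islin p)) qtruncX ifT //; apply/qtpP => j.
by rewrite (leq_ltn_trans (mnm_le_mdeg _ j)) // (eqP hb).
Qed.


Lemma psiG_dppow e m (c : 'I_e -> R) :
  psiG p ifc (m %% p)%N (dppow m c) =
  ifc (m %% p)%N *: tens (qtrunc p (lf c ^+ (m %% p)%N)) (dppow (m %/ p)%N (fun j => c j ^+ p)).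
Proof.
set r := (m %% p)%N; set q := (m %/ p)%N.
have hr : (r < p)%N by rewrite ltn_mod.
rewrite lf_exp // (islinZ _ _ (qtrunc_islin p)) qtrunc_Smul // (islinZ _ _ (tens_islinl _)).
rewrite scalerA ifcK // scale1r.
apply/mpolyP => m0; rewrite -(mjoinK m0); move: (mfst m0) (msnd m0) => s t.
rewrite /dppow (islin_sum _ _ _ (psiG_islin p ifc r)).
rewrite (big_morph _ (@mcoeffD _ _ _) (@mcoeff0 _ _ _)).
under eq_bigr do rewrite (islinZ _ _ (psiG_islin p ifc r)) psiGX mcoeffZ.
rewrite (@bsum_single _ _ m.+1 (fun b => mdeg b == m)
  (fun b => (\prod_(j < e) c j ^+ b j) * (if res p b == r then ifcm (amod p b) *: 'X_[mjoin (amod p b) (adiv p b)] else 0)@_(mjoin s t)) (s + t *+ p)%MM); last first.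
  move=> b hb; case: ifP => _; last by rewrite mcoeff0 mulr0.
  rewrite mcoeffZ mcoeffX mjoin_eq; case: (eqVneq (amod p b) s) => [es|] /=; last by rewrite mulr0n !mulr0.
  case: (eqVneq (adiv p b) t) => [et|] /=; last by rewrite mulr0n !mulr0.
  by move: hb; rewrite -(amod_adiv p b) es et eqxx.
rewrite /Smul (@mcoeff_tens_bsum R e r.+1 q.+1 (fun b => mdeg b == r) (fun b => mdeg b == q) (fun b => ifcm b * cpow c b) (fun b => \prod_(j < e) (c j ^+ p) ^+ b j) s t).
have mdb : mdeg (s + t *+ p)%MM = (mdeg s + mdeg t * p)%N by rewrite mdegD mdegMn.
case: (boolP (qtp p s)) => hs; last first.
  have -> : (mdeg s == r) = false.
    apply/negP => /eqP es; move/negP: hs; apply; apply/qtpP => j.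
    by rewrite (leq_ltn_trans (mnm_le_mdeg _ j)) // es.
  rewrite !andbF /=; case: ifP => // _; case: ifP => _; last by rewrite mcoeff0 mulr0.
  rewrite mcoeffZ mcoeffX mjoin_eq; case: eqP => [es|] /=; last by rewrite mulr0n !mulr0.
  by move: hs; rewrite -es (qtp_amod charR).
rewrite (amod_small t hs) (adiv_small charR t hs) (res_small t hs) mdb.
case: (eqVneq (mdeg s) r) => es; last first.
  rewrite andbF /=; case: ifP => // _; by rewrite mcoeff0 mulr0.
rewrite es ltnSn /=.
have hm : m = (r + q * p)%N by rewrite addnC /q /r -divn_eq.
have -> : (r + mdeg t * p == m) = (mdeg t == q) by rewrite hm eqn_add2l eqn_pmul2r.
case: (eqVneq (mdeg t) q) => et; last by rewrite !andbF.
rewrite et -hm ltnSn /=.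
rewrite mcoeffZ mcoeffX eqxx mulr1.
change (\prod_(j < e) c j ^+ (s + t *+ p)%MM j) with (cpow c (s + t *+ p)%MM).
rewrite cpowD cpowMn /cpow ltnSn /=; ring.
Qed.


End Multinom.


Section LinTools.
Variable R : comNzRingType.

Lemma islin_compose d1 d2 d3 (G : {mpoly R[d2]} -> {mpoly R[d3]}) (H : {mpoly R[d1]} -> {mpoly R[d2]}) :
  islin G -> islin H -> islin (fun x => G (H x)).
Proof. by move=> hG hH c f g; rewrite hH hG. Qed.

Lemma islin_mull d (y : {mpoly R[d]}) : islin (fun x => x * y).
Proof. by move=> c f g; rewrite mulrDl scalerAl. Qed.

Lemma islin_mulr d (y : {mpoly R[d]}) : islin (fun x => y * x).
Proof. by move=> c f g; rewrite mulrDr scalerAr. Qed.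

Lemma lin_ext d d' (F1 F2 : {mpoly R[d]} -> {mpoly R[d']}) f :
  islin F1 -> islin F2 -> (forall a, F1 'X_[a] = F2 'X_[a]) -> F1 f = F2 f.
Proof. by move=> h1 h2 h; rewrite (linE _ h1) (linE _ h2); apply: eq_lin => a _; apply: h. Qed.

Lemma qtrunc_mul d p (x y : {mpoly R[d]}) :
  qtrunc p (qtrunc p x * qtrunc p y) = qtrunc p (x * y).
Proof.
pose F1 := fun x => qtrunc p (qtrunc p x * qtrunc p y).
pose F2 := fun x => qtrunc p (x * y).
change (F1 x = F2 x); apply: lin_ext => [||a].
- exact: islin_compose (qtrunc_islin p) (islin_compose (islin_mull _) (qtrunc_islin p)).
- exact: islin_compose (qtrunc_islin p) (islin_mull _).
rewrite /F1 /F2; clear F1 F2.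
pose F1 := fun y => qtrunc p (qtrunc p 'X_[R, a] * qtrunc p y).
pose F2 := fun y => qtrunc p ('X_[R, a] * y).
change (F1 y = F2 y); apply: lin_ext => [||b].
- exact: islin_compose (qtrunc_islin p) (islin_compose (islin_mulr _) (qtrunc_islin p)).
- exact: islin_compose (qtrunc_islin p) (islin_mulr _).
rewrite /F1 /F2 !qtruncX -mpolyXD qtruncX.
case: (boolP (qtp p a)) => ha; last first.
  rewrite mul0r (islin0 (qtrunc_islin p)) ifN //; apply: contra ha => /qtpP h; apply/qtpP => j.
  by apply: leq_ltn_trans (h j); rewrite mnmDE leq_addr.
case: (boolP (qtp p b)) => hb; last first.
  rewrite mulr0 (islin0 (qtrunc_islin p)) ifN //; apply: contra hb => /qtpP h; apply/qtpP => j.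
  by apply: leq_ltn_trans (h j); rewrite mnmDE leq_addl.
by rewrite -mpolyXD qtruncX.
Qed.

Lemma tmul_tens d p (u v u' v' : {mpoly R[d]}) :
  tmul p (tens u v) (tens u' v') = tens (qtrunc p (u * u')) (dpmul v v').
Proof.
pose F1 := fun u => tmul p (tens u v) (tens u' v').
pose F2 := fun u => tens (qtrunc p (u * u')) (dpmul v v').
change (F1 u = F2 u); apply: lin_ext => [||a].
- exact: islin_compose (tmul_islinl _ _) (tens_islinl _).
- exact: islin_compose (tens_islinl _) (islin_compose (qtrunc_islin p) (islin_mull _)).
rewrite /F1 /F2; clear F1 F2.
pose F1 := fun v => tmul p (tens 'X_[R, a] v) (tens u' v').
pose F2 := fun v => tens (qtrunc p ('X_[R, a] * u')) (dpmul v v').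
change (F1 v = F2 v); apply: lin_ext => [||b].
- exact: islin_compose (tmul_islinl _ _) (tens_islinr _).
- exact: islin_compose (tens_islinr _) (dpmul_islinl _).
rewrite /F1 /F2; clear F1 F2.
pose F1 := fun u' => tmul p (tens 'X_[R, a] 'X_[b]) (tens u' v').
pose F2 := fun u' => tens (qtrunc p ('X_[R, a] * u')) (dpmul 'X_[b] v').
change (F1 u' = F2 u'); apply: lin_ext => [||a'].
- exact: islin_compose (tmul_islinr _ _) (tens_islinl _).
- exact: islin_compose (tens_islinl _) (islin_compose (qtrunc_islin p) (islin_mulr _)).
rewrite /F1 /F2; clear F1 F2.
pose F1 := fun v' => tmul p (tens 'X_[R, a] 'X_[b]) (tens 'X_[a'] v').
pose F2 := fun v' => tens (qtrunc p ('X_[R, a] * 'X_[a'])) (dpmul 'X_[b] v').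
change (F1 v' = F2 v'); apply: lin_ext => [||b'].
- exact: islin_compose (tmul_islinr _ _) (tens_islinr _).
- exact: islin_compose (tens_islinr _) (dpmul_islinr _).
by rewrite /F1 /F2 !tensXX tmulXX mpolyXD dpmulXX.
Qed.

End LinTools.


Section ListProd.
Variables (R : comNzRingType) (p : nat).
Hypothesis charR : p \in [pchar R].
Variable ifc : nat -> R.
Hypothesis ifcK : forall m, (m < p)%N -> ifc m * (m`!)%:R = 1.

Lemma J_dppow e m (c : 'I_e -> R) : J p (m %% p) (dppow m c).
Proof.
apply: J_sum => b hb; apply: JZ; apply: JX.
by move/eqP: hb => hb; rewrite -[X in (X %% p <= _)%N]hb res_ge_mod.
Qed.

Lemma J_dpprod e (L : seq (nat * ('I_e -> R))) :
  J p (\sum_(x <- L) x.1 %% p) (dpprod [seq dppow x.1 x.2 | x <- L]).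
Proof.
elim: L => [|x L IH] /=; first by rewrite big_nil -mpolyX0; apply: JX.
by rewrite big_cons; apply: (J_dpmul charR) => //; apply: J_dppow.
Qed.

Lemma qtrunc1 d : qtrunc p (1 : {mpoly R[d]}) = 1.
Proof. by rewrite -mpolyX0 qtruncX ifT //; apply/qtpP => j; rewrite mnm0E (prime_gt0 (pcharf_prime charR)). Qed.

Lemma tens11 d : tens (1 : {mpoly R[d]}) 1 = 1.
Proof. by rewrite -!mpolyX0 tensXX mjoin0. Qed.

Lemma psiG_dpprod e (L : seq (nat * ('I_e -> R))) :
  psiG p ifc (\sum_(x <- L) x.1 %% p)%N (dpprod [seq dppow x.1 x.2 | x <- L]) =
  (\prod_(x <- L) ifc (x.1 %% p)%N) *:
    tens (qtrunc p (\prod_(x <- L) lf x.2 ^+ (x.1 %% p)%N))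
         (dpprod [seq dppow (x.1 %/ p)%N (fun j => x.2 j ^+ p) | x <- L]).
Proof.
elim: L => [|x L IH] /=.
  by rewrite !big_nil (psiG1 charR ifcK) scale1r qtrunc1 tens11.
rewrite !big_cons (psiG_dpmul charR ifcK (J_dppow _ _) (J_dpprod L)) IH.
rewrite (psiG_dppow charR ifcK).
rewrite (islinZ _ _ (tmul_islinl _ _)) (islinZ _ _ (tmul_islinr _ _)) scalerA tmul_tens.
by rewrite qtrunc_mul.
Qed.

End ListProd.


Lemma msupp_psiG (R : comNzRingType) p ifc d n (f : {mpoly R[d]}) (Q : pred 'X_{1..d + d}) :
  (forall a, a \in msupp f -> res p a = n -> Q (mjoin (amod p a) (adiv p a))) ->
  all Q (msupp (psiG p ifc n f)).
Proof.
move=> h; apply: msupp_lin => a ha; case: eqP => [e|_]; last by rewrite msupp0.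
apply/allP => m /msuppZ_le; rewrite msuppX inE => /eqP ->; exact: h.
Qed.

Lemma dppow_ext (R : comNzRingType) e n (c c' : 'I_e -> R) : c =1 c' -> dppow n c = dppow n c'.
Proof. by move=> h; apply: eq_bigr => b _; congr (_ *: _); apply: eq_bigr => j _; rewrite h. Qed.

Section Final.
Variables (k : fieldType) (p : nat).
Hypothesis charp : p \in [pchar k].
Let pp : prime p. Proof. exact: pcharf_prime charp. Qed.

Definition ifck (m : nat) : k := ((m`!)%:R)^-1.
Lemma ifckK m : (m < p)%N -> ifck m * (m`!)%:R = 1.
Proof. by move=> h; rewrite /ifck mulVf // (fact_neq0 charp). Qed.

Definition psik d n (f : {mpoly k[d]}) : {mpoly k[d + d]} := psiG p ifck n f.

Section Nat.
Variable R : comAlgType k.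
Let charR : p \in [pchar R]. Proof. by rewrite (pchar_lalg R). Qed.
Definition ifcR (m : nat) : R := (ifck m)%:A.
Lemma ifcRK m : (m < p)%N -> ifcR m * (m`!)%:R = 1.
Proof.
move=> h; rewrite /ifcR -(rmorph_nat (GRing.in_alg R)) /=.
by rewrite -scalerAl mul1r scalerA ifckK // scale1r.
Qed.

Lemma bc_psi d n (g : {mpoly R[d]}) : bc (@psik d n) g = psiG p ifcR n g.
Proof.
rewrite /bc /psiG /lin; apply: eq_bigr => a _; congr (_ *: _).
rewrite /psik psiGX.
change (map_mpoly (n := (d + d)%N) (fun c : k => c%:A)) with (map_mpoly (n := (d + d)%N) (GRing.in_alg R)).
case: ifP => _; last by rewrite raddf0.
rewrite map_mpolyZ map_mpolyX; congr (_ *: _).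
by rewrite /ifcm rmorph_prod.
Qed.

Lemma GammaMapE d e (M : 'M[R]_(d, e)) f :
  GammaMap M f = lin (fun a => dpprod [seq dppow (a i) (fun j => M i j) | i <- enum 'I_d]) f.
Proof. by []. Qed.

Lemma TMapE d e (M : 'M[R]_(d, e)) t :
  TMap p M t = lin (fun m => tens (QMap p M 'X_[mfst m]) (Gamma1Map p M 'X_[msnd m])) t.
Proof. by []. Qed.

Lemma natural d e (M : 'M[R]_(d, e)) n (f : {mpoly R[d]}) :
  Ipow n f -> bc (@psik e n) (GammaMap M f) = TMap p M (bc (@psik d n) f).
Proof.
move/(Ipow_J charR) => /allP hf; rewrite !bc_psi GammaMapE TMapE.
rewrite (islin_comp (psiG_islin p ifcR n)) {2}/psiG lin_comp.
apply: eq_lin => a /hf ha.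
set L := [seq (a i, fun j => M i j) | i <- enum 'I_d].
have eL : [seq dppow (a i) (fun j => M i j) | i <- enum 'I_d] = [seq dppow x.1 x.2 | x <- L].
  by rewrite /L; elim: (enum _) => //= i s ->.
have sL : (\sum_(x <- L) x.1 %% p)%N = res p a by rewrite /L big_map big_enum.
rewrite eL; case: (eqVneq (res p a) n) => ea; last first.
  rewrite lin0 psiG_J //; apply: (J_le (m := (\sum_(x <- L) x.1 %% p)%N)); last exact: J_dpprod.
  by rewrite sL ltn_neqAle eq_sym ea ha.
rewrite linXZ mfst_mjoin msnd_mjoin -{1}ea -sL (psiG_dpprod charR ifcRK).
congr (_ *: tens _ _).
- by rewrite /L big_map big_enum /ifcm; apply: eq_bigr => i _; rewrite mnmE.
- rewrite /QMap comp_mpolyX /L big_map big_enum; congr (qtrunc p _).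
  by apply: eq_bigr => i _; rewrite tnth_mktuple mnmE.
- rewrite /Gamma1Map GammaMapE linX /L -map_comp; congr dpprod; apply: eq_map => i /=.
  by rewrite mnmE; apply: dppow_ext => j; rewrite mxE.
Qed.

End Nat.

End Final.

Section KLevel.
Variables (k : fieldType) (p : nat).
Hypothesis charp : p \in [pchar k].
Let pp : prime p. Proof. exact: pcharf_prime charp. Qed.

Lemma surj d n (t : {mpoly k[d + d]}) : isQGam p t -> Qdeg n t ->
  exists2 f, Ipow n f & @psik k p d n f = t.
Proof.
move=> /allP hq /allP hd.
pose phi := fun m : 'X_{1..d + d} => ((\prod_(j < d) (mfst m j)`!)%:R : k) *: 'X_[(mfst m + msnd m *+ p)%MM].
exists (lin phi t).
  apply: (J_Ipow charp); apply: msupp_lin => m hm.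
  apply/allP => b /msuppZ_le; rewrite msuppX inE => /eqP ->.
  by rewrite (res_small _ (hq m hm)) (eqP (hd m hm)).
rewrite /psik (islin_comp (psiG_islin p (ifck k) n)) -[RHS]lin_id; apply: eq_lin => m hm.
have hs : qtp p (mfst m) := hq m hm.
rewrite /phi (islinZ _ _ (psiG_islin p (ifck k) n)) psiGX (res_small _ hs) (eqP (hd m hm)) eqxx.
rewrite (amod_small _ hs) (adiv_small charp _ hs) mjoinK scalerA.
rewrite -[RHS]scale1r; congr (_ *: _).
rewrite /ifcm natr_prod -big_split /=; apply: big1 => j _.
by rewrite mulrC (ifckK charp) //; move/qtpP: hs.
Qed.

Lemma ifcm_neq0 d (s : 'X_{1..d}) : qtp p s -> ifcm (ifck k) s != 0.
Proof.
move/qtpP => h; rewrite /ifcm; apply/prodf_neq0 => j _.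
by rewrite /ifck invr_eq0 (fact_neq0 charp).
Qed.

Lemma kernel d n (f : {mpoly k[d]}) : Ipow n f -> (@psik k p d n f = 0 <-> Ipow n.+1 f).
Proof.
move=> /(Ipow_J charp) hJ; split; last by move/(Ipow_J charp); exact: psiG_J.
move=> h0; apply: (J_Ipow charp); apply/allP => a ha.
move/allP: hJ => /(_ a ha); rewrite leq_eqVlt => /orP [/eqP ea|//].
exfalso; have := congr1 (mcoeff (mjoin (amod p a) (adiv p a))) h0.
rewrite mcoeff0 /psik /psiG mcoeff_lin (bigD1_seq a) ?msupp_uniq //= -ea eqxx.
rewrite big1_seq ?addr0 => [|a' /andP [a'a _]].
  rewrite mcoeffZ mcoeffX eqxx mulr1 => /eqP; apply/negP; rewrite mulf_eq0 negb_or.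
  by rewrite -mcoeff_msupp ha ifcm_neq0 // (qtp_amod charp).
case: ifP => _; last by rewrite mcoeff0 mulr0.
rewrite mcoeffZ mcoeffX mjoin_eq; case: (eqVneq (amod p a') (amod p a)) => [e1|] /=; last by rewrite mulr0n !mulr0.
case: (eqVneq (adiv p a') (adiv p a)) => [e2|] /=; last by rewrite mulr0n !mulr0.
by move: a'a; rewrite -(amod_adiv p a') e1 e2 amod_adiv eqxx.
Qed.

End KLevel.

Theorem proposition4p9 (k : fieldType) (p : nat) (charp : p \in [pchar k]) :
  exists psi : forall d : nat, nat -> {mpoly k[d]} -> {mpoly k[d + d]},
    (forall d n (a : k) (f g : {mpoly k[d]}),
        psi d n (a *: f + g) = a *: psi d n f + psi d n g) /\
    (forall d n (f : {mpoly k[d]}), Ipow n f ->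
        isQGam p (psi d n f) /\ Qdeg n (psi d n f)) /\
    (forall d n (t : {mpoly k[d + d]}), isQGam p t -> Qdeg n t ->
        exists2 f, Ipow n f & psi d n f = t) /\
    (forall d n (f : {mpoly k[d]}), Ipow n f -> (psi d n f = 0 <-> Ipow n.+1 f)) /\
    (forall d, psi d 0%N 1 = 1) /\
    (forall d n m (f g : {mpoly k[d]}), Ipow n f -> Ipow m g ->
        psi d (n + m)%N (dpmul f g) = tmul p (psi d n f) (psi d m g)) /\
    (forall d n w (f : {mpoly k[d]}), Ipow n f -> dphomog w f ->
        Tweight p w (psi d n f)) /\
    (forall (R : comAlgType k) d e (M : 'M[R]_(d, e)) n (f : {mpoly R[d]}),
        Ipow n f ->
        bc (psi e n) (GammaMap M f) = TMap p M (bc (psi d n) f)).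
Proof.
exists (fun d n f => @psik k p d n f).
split; first by move=> d n a f g; exact: psiG_islin.
split.
  move=> d n f /(Ipow_J charp) /allP hf; split.
    by apply: msupp_psiG => a _ _; rewrite mfst_mjoin; exact: (qtp_amod charp).
  by apply: msupp_psiG => a _ ea; rewrite mfst_mjoin mdeg_amod ea.
split; first by move=> d n t; exact: surj.
split; first by move=> d n f; exact: kernel.
split; first by move=> d; exact: (psiG1 charp (ifckK charp)).
split.
  move=> d n m f g /(Ipow_J charp) hf /(Ipow_J charp) hg.
  exact: (psiG_dpmul charp (ifckK charp)).
split.
  move=> d n w f _ /allP hw; apply: msupp_psiG => a ha _.
  by rewrite mfst_mjoin msnd_mjoin mdeg_amod -mdeg_split (eqP (hw a ha)).
by move=> R d e M n f; exact: natural.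
Qed.
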